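(* Let $m,n\ge 1$ and let $D,E$ be linear subspaces of $M_{m\times n}$ such that $\sigma(D,E)=\operatorname{conv}(\Phi_D\cup\Phi^E)$ is a proper face of the cone $\mathbb{D}$ of decomposable maps, and such that every interior point of $\sigma(D,E)$ is an interior point of the cone $\mathbb{P}_1$ of positive linear maps $M_m\to M_n$. Then every nonzero element $A$ of $$\sigma(D,E)'=\{A\in\mathbb{T}:\ \langle A,\phi\rangle=0 \text{ for every }\phi\in\sigma(D,E)\}$$ belongs to $\mathbb{T}\setminus\mathbb{V}_1$.
   Context: $M_k$ denotes complex $k\times k$ matrices and $M_{m\times n}$ complex $m\times n$ matrices; $X^{\mathrm t}$ is the transpose. A linear map $\phi:M_m\to M_n$ is positive if it maps positive semi-definite matrices to positive semi-definite matrices; $\mathbb{P}_1$ is the cone of positive maps. For a finite set $\mathcal V=\{V_1,\dots,V_\nu\}\subset M_{m\times n}$ put $\phi_{\mathcal V}(X)=\sum_i V_i^*XV_i$ and $\phi^{\mathcal V}(X)=\sum_i V_i^*X^{\mathrm t}V_i$. The cone of decomposable maps is $\mathbb{D}=\{\phi_{\mathcal V}+\phi^{\mathcal W}\}$ (over all finite $\mathcal V,\mathcal W\subset M_{m\times n}$). For a subspace $D\subset M_{m\times n}$, $\Phi_D=\{\phi_{\mathcal V}:\operatorname{span}\mathcal V\subset D\}$ and $\Phi^E=\{\phi^{\mathcal V}:\operatorname{span}\mathcal V\subset E\}$. A point $x$ of a convex set $C$ is an interior point of $C$ if for every $y\in C$ there is $t>1$ with $(1-t)y+tx\in C$. Identify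 $M_n\otimes M_m$ with $m\times m$ block matrices $A=\sum_{i,j=1}^m a_{ij}\otimes e_{ij}$ with blocks $a_{ij}\in M_n$; the partial transpose is $A^\tau=\sum_{i,j}a_{ji}\otimes e_{ij}$. $\mathbb{T}$ is the cone of $A\in M_n\otimes M_m$ with both $A$ and $A^\tau$ positive semi-definite. For $z\in M_{m\times n}$ with rows $z_1,\dots,z_m\in\mathbb C^n$ (as column vectors), $\tilde z\tilde z^*$ is the block matrix whose $(i,j)$ block is $z_iz_j^*$; $\mathbb{V}_1$ is the convex cone generated by $\{\tilde z\tilde z^*: \operatorname{rank} z\le 1\}$ (the separable cone). The bilinear pairing is $\langle A,\phi\rangle=\sum_{i,j=1}^m\operatorname{Tr}\big(a_{ij}\,\phi(e_{ij})^{\mathrm t}\big)$ for $A=\sum a_{ij}\otimes e_{ij}$ and $\phi:M_m\to M_n$ linear, where $e_{ij}$ are the matrix units of $M_m$. *)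

(* Defs.v *)
From HB Require Import structures.
From mathcomp Require Import all_boot all_order all_algebra.
From mathcomp Require Import reals complex.
From Stdlib Require List.
Set Implicit Arguments. Unset Strict Implicit. Unset Printing Implicit Defensive.
Import Order.TTheory GRing.Theory Num.Theory.
Local Open Scope ring_scope.

Section Defs.
Variable C : numClosedFieldType.

Definition adj {p q : nat} (M : 'M[C]_(p, q)) : 'M[C]_(q, p) := (map_mx Num.conj M)^T.

Definition psd {k : nat} (M : 'M[C]_k) : Prop :=
  forall x : 'cV[C]_k, 0 <= (adj x *m M *m x) 0 0.

Definition mapT (m n : nat) := 'M[C]_m -> 'M[C]_n.

Definition positive_map {m n : nat} (phi : mapT m n) : Prop :=
  forall X : 'M[C]_m, psd X -> psd (phi X).

Definition P1 {m n : nat} (phi : mapT m n) : Prop :=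
  linear phi /\ positive_map phi.

Definition phi_low {m n : nat} (V : seq 'M[C]_(m, n)) : mapT m n :=
  fun X => \sum_(v <- V) adj v *m X *m v.
Definition phi_up {m n : nat} (V : seq 'M[C]_(m, n)) : mapT m n :=
  fun X => \sum_(v <- V) adj v *m X^T *m v.

Definition Dec {m n : nat} (phi : mapT m n) : Prop :=
  exists V W : seq 'M[C]_(m, n), forall X, phi X = phi_low V X + phi_up W X.

Definition PhiD {m n : nat} (D : {vspace 'M[C]_(m, n)}) (phi : mapT m n) : Prop :=
  exists V : seq 'M[C]_(m, n), all (fun v => v \in D) V /\ forall X, phi X = phi_low V X.
Definition PhiE {m n : nat} (E : {vspace 'M[C]_(m, n)}) (phi : mapT m n) : Prop :=
  exists V : seq 'M[C]_(m, n), all (fun v => v \in E) V /\ forall X, phi X = phi_up V X.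

Definition comb {m n : nat} (t : C) (y x : mapT m n) : mapT m n :=
  fun X => (1 - t) *: y X + t *: x X.

Definition conv {m n : nat} (S : mapT m n -> Prop) (phi : mapT m n) : Prop :=
  exists l : seq (C * mapT m n),
    (forall p, List.In p l -> 0 <= p.1 /\ S p.2) /\
    \sum_(p <- l) p.1 = 1 /\
    forall X, phi X = \sum_(p <- l) p.1 *: p.2 X.

Definition sigmaDE {m n : nat} (D E : {vspace 'M[C]_(m, n)}) : mapT m n -> Prop :=
  conv (fun phi => PhiD D phi \/ PhiE E phi).

(* extensional membership (sets of maps are considered up to pointwise equality) *)
Definition convex_set {m n : nat} (S : mapT m n -> Prop) : Prop :=
  forall x y t, S x -> S y -> 0 <= t -> t <= 1 -> S (comb t x y).

Definition face {m n : nat} (F K : mapT m n -> Prop) : Prop :=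
  (forall x, F x -> K x) /\ convex_set F /\
  forall x y t, K x -> K y -> 0 < t -> t < 1 -> F (comb t x y) -> F x /\ F y.

Definition proper_face {m n : nat} (F K : mapT m n -> Prop) : Prop :=
  face F K /\ exists x, K x /\ ~ F x.

Definition interior_point {m n : nat} (K : mapT m n -> Prop) (x : mapT m n) : Prop :=
  K x /\ forall y, K y -> exists t : C, 1 < t /\ K (comb t y x).

(* elements of M_n (x) M_m as m x m block matrices with n x n blocks *)
Definition blockT (m n : nat) := 'M['M[C]_n]_m.

Definition full {m n : nat} (A : blockT m n) :=
  \mxblock_(i < m, j < m) A i j.

(* partial transpose: (i,j) block of A^tau is a_{ji} *)
Definition ptrans {m n : nat} (A : blockT m n) : blockT m n := A^T.

Definition Tcone {m n : nat} (A : blockT m n) : Prop :=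
  psd (full A) /\ psd (full (ptrans A)).

(* z~ z~^* : (i,j) block is z_i z_j^*, z_i = i-th row of z as a column vector *)
Definition ztilde {m n : nat} (z : 'M[C]_(m, n)) : blockT m n :=
  \matrix_(i < m, j < m) ((row i z)^T *m adj ((row j z)^T)).

Definition V1 {m n : nat} (A : blockT m n) : Prop :=
  exists l : seq (C * 'M[C]_(m, n)),
    (forall p, List.In p l -> 0 <= p.1 /\ (\rank p.2 <= 1)%N) /\
    A = \sum_(p <- l) map_mx (fun M => p.1 *: M) (ztilde p.2).

Definition pairing {m n : nat} (A : blockT m n) (phi : mapT m n) : C :=
  \sum_(i < m) \sum_(j < m) \tr (A i j *m (phi (delta_mx i j))^T).

Definition dual_face {m n : nat} (S : mapT m n -> Prop) (A : blockT m n) : Prop :=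
  Tcone A /\ forall phi, S phi -> pairing A phi = 0.

End Defs.

(* Main.v *)
Require Import Defs.
From HB Require Import structures.
From mathcomp Require Import all_boot all_order all_algebra.
From mathcomp Require Import reals complex.
Set Implicit Arguments. Unset Strict Implicit. Unset Printing Implicit Defensive.
Import Order.TTheory GRing.Theory Num.Theory.
Local Open Scope ring_scope.

Section Aux.
Variable C : numClosedFieldType.

Lemma adjD p q (A B : 'M[C]_(p,q)) : adj (A + B) = adj A + adj B.
Proof. by apply/matrixP=> i j; rewrite !mxE rmorphD. Qed.
Lemma adjN p q (A : 'M[C]_(p,q)) : adj (- A) = - adj A.
Proof. by apply/matrixP=> i j; rewrite !mxE rmorphN. Qed.
Lemma adjB p q (A B : 'M[C]_(p,q)) : adj (A - B) = adj A - adj B.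
Proof. by rewrite adjD adjN. Qed.
Lemma adjZ p q c (A : 'M[C]_(p,q)) : adj (c *: A) = c^* *: adj A.
Proof. by apply/matrixP=> i j; rewrite !mxE rmorphM. Qed.
Lemma adj0 p q : adj (0 : 'M[C]_(p,q)) = 0.
Proof. by apply/matrixP=> i j; rewrite !mxE rmorph0. Qed.
Lemma adjK p q (A : 'M[C]_(p,q)) : adj (adj A) = A.
Proof. by apply/matrixP=> i j; rewrite !mxE conjCK. Qed.
Lemma adj_sum p q I (r : seq I) (F : I -> 'M[C]_(p,q)) :
  adj (\sum_(i <- r) F i) = \sum_(i <- r) adj (F i).
Proof.
elim: r => [|x r IH]; first by rewrite !big_nil adj0.
by rewrite !big_cons adjD IH.
Qed.
Lemma adj_mul p q s (A : 'M[C]_(p,q)) (B : 'M[C]_(q,s)) : adj (A *m B) = adj B *m adj A.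
Proof.
apply/matrixP=> i j; rewrite !mxE rmorph_sum; apply: eq_bigr => k _.
by rewrite !mxE rmorphM mulrC.
Qed.

Definition Q m n (X : 'M[C]_m) (u w : 'M[C]_(m,n)) := adj u *m X *m w.

Lemma QDl m n X (u1 u2 w : 'M[C]_(m,n)) : Q X (u1 + u2) w = Q X u1 w + Q X u2 w.
Proof. by rewrite /Q adjD !mulmxDl. Qed.
Lemma QDr m n X (u w1 w2 : 'M[C]_(m,n)) : Q X u (w1 + w2) = Q X u w1 + Q X u w2.
Proof. by rewrite /Q mulmxDr. Qed.
Lemma QNl m n X (u w : 'M[C]_(m,n)) : Q X (- u) w = - Q X u w.
Proof. by rewrite /Q adjN !mulNmx. Qed.
Lemma QNr m n X (u w : 'M[C]_(m,n)) : Q X u (- w) = - Q X u w.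
Proof. by rewrite /Q mulmxN. Qed.
Lemma QZl m n X c (u w : 'M[C]_(m,n)) : Q X (c *: u) w = c^* *: Q X u w.
Proof. by rewrite /Q adjZ !scalemxAl. Qed.
Lemma QZr m n X c (u w : 'M[C]_(m,n)) : Q X u (c *: w) = c *: Q X u w.
Proof. by rewrite /Q scalemxAr. Qed.
Lemma Qsuml m n X I (r : seq I) (F : I -> 'M[C]_(m,n)) w :
  Q X (\sum_(i <- r) F i) w = \sum_(i <- r) Q X (F i) w.
Proof. by rewrite /Q adj_sum !mulmx_suml. Qed.
Lemma Qsumr m n X I (r : seq I) (F : I -> 'M[C]_(m,n)) u :
  Q X u (\sum_(i <- r) F i) = \sum_(i <- r) Q X u (F i).
Proof. by rewrite /Q mulmx_sumr. Qed.

Lemma lagrange m n d X (x : 'I_d -> 'M[C]_(m,n)) :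
  \sum_(j < d) \sum_(k < d) Q X (x j - x k) (x j - x k) =
  (\sum_(j < d) Q X (x j) (x j)) *+ d.*2 - (Q X (\sum_j x j) (\sum_j x j)) *+ 2.
Proof.
have E j k : Q X (x j - x k) (x j - x k) =
   Q X (x j) (x j) + Q X (x k) (x k) - (Q X (x j) (x k) + Q X (x k) (x j)).
  rewrite QDl !QDr !QNl !QNr opprK.
  set a := Q X (x j) (x j); set b := Q X (x j) (x k); set c := Q X (x k) (x j); set e := Q X (x k) (x k).
  by rewrite [- c + e]addrC addrACA opprD.
under eq_bigr => j _ do (under eq_bigr => k _ do rewrite E; rewrite sumrB big_split /=).
rewrite sumrB big_split /=.
rewrite Qsuml; under [X in _ = _ - X *+ 2]eq_bigr => j _ do rewrite Qsumr.
have H1 : \sum_(i < d) \sum_(i0 < d) (Q X (x i) (x i0) + Q X (x i0) (x i)) =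
   (\sum_(j < d) \sum_(i < d) Q X (x j) (x i)) *+ 2.
  under eq_bigr => j _ do rewrite big_split /=.
  rewrite big_split /= [X in _ + X]exchange_big /=.
  by rewrite mulr2n.
have H2 : \sum_(i < d) \sum_(i0 < d) Q X (x i0) (x i0) = \sum_(i < d) \sum_(i0 < d) Q X (x i) (x i).
  by rewrite exchange_big.
rewrite H1 H2; congr (_ - _).
under eq_bigr => j _ do rewrite sumr_const card_ord.
by rewrite -mulr2n sumrMnl -mulrnA muln2.
Qed.

Lemma sqrtCC (a : C) : 0 <= a -> (sqrtC a)^* * sqrtC a = a.
Proof.
move=> ha; rewrite conj_Creal; first by rewrite -expr2 sqrtCK.
by apply: ger0_real; rewrite sqrtC_ge0.
Qed.

Lemma QZZ m n X (s : C) (u : 'M[C]_(m,n)) : Q X (s *: u) (s *: u) = (s^* * s) *: Q X u u.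
Proof. by rewrite QZl QZr scalerA. Qed.

Lemma phi_low_Q m n (V : seq 'M[C]_(m,n)) X : phi_low V X = \sum_(v <- V) Q X v v.
Proof. by []. Qed.

Section Key.
Variables (m n : nat) (D : {vspace 'M[C]_(m,n)}).
Let d := \dim D.
Let b (j : 'I_d) := (vbasis D)`_j.
Let w (v : 'M[C]_(m,n)) (j : 'I_d) := `|coord (vbasis D) j v| ^+ 2.

Lemma b_mem j : b j \in D.
Proof. by apply: vbasis_mem; apply: mem_nth; rewrite size_tuple. Qed.

Lemma w_ge0 v j : 0 <= w v j.
Proof. by rewrite /w exprn_ge0. Qed.

Lemma expand (v : 'M[C]_(m,n)) (e : C) : v \in D -> 0 <= e ->
  exists V2, all (fun u => u \in D) V2 /\ forall X,
    phi_low V2 X = \sum_(j < d) (e * d%:R * w v j) *: Q X (b j) (b j) - e *: Q X v v.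
Proof.
move=> vD he.
pose x j := coord (vbasis D) j v *: b j.
pose s := sqrtC (e / 2%:R).
exists [seq s *: (x jk.1 - x jk.2) | jk <- [seq (j, k) | j <- index_enum 'I_d, k <- index_enum 'I_d]].
split.
  by apply/allP => u /mapP [[j k] _ ->]; rewrite memvZ // memvB // memvZ // b_mem.
move=> X; rewrite phi_low_Q big_map big_allpairs /=.
have hs : s^* * s = e / 2%:R by rewrite sqrtCC // divr_ge0 // ler0n.
under eq_bigr => j _ do under eq_bigr => k _ do rewrite QZZ hs.
under eq_bigr => j _ do rewrite -scaler_sumr.
rewrite -scaler_sumr (lagrange X x).
have -> : \sum_j x j = v by rewrite [RHS](coord_vbasis vD).
have -> : \sum_(j < d) Q X (x j) (x j) = \sum_(j < d) w v j *: Q X (b j) (b j).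
  by apply: eq_bigr => j _; rewrite QZZ /w normCK mulrC.
rewrite scalerBr; congr (_ - _); last first.
  by rewrite -scaler_nat scalerA -mulrA mulVf ?mulr1 // pnatr_eq0.
rewrite -scaler_nat -muln2 natrM scalerA scaler_sumr; apply: eq_bigr => j _.
rewrite scalerA; congr (_ *: _).
congr (_ * _); rewrite [(_ * 2)]mulrC mulrA divfK // pnatr_eq0.
by [].
Qed.

Lemma key (e : C) (V : seq 'M[C]_(m,n)) : all (fun u => u \in D) V -> 0 <= e ->
  forall K : 'I_d -> C, (forall j, e * d%:R * \sum_(v <- V) w v j <= K j) ->
  exists V', all (fun u => u \in D) V' /\ forall X,
    \sum_(j < d) K j *: Q X (b j) (b j) - e *: phi_low V X = phi_low V' X.
Proof.
move=> + he; elim: V => [|v V IH] /= hV K hK.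
  exists [seq sqrtC (K j) *: b j | j <- index_enum 'I_d]; split.
    by apply/allP => u /mapP [j _ ->]; rewrite memvZ // b_mem.
  move=> X; rewrite !phi_low_Q big_nil scaler0 subr0 big_map.
  apply: eq_bigr => j _; rewrite QZZ sqrtCC //.
  by apply: le_trans (hK j); rewrite big_nil mulr0.
case/andP: hV => vD hV.
have hK' : forall j, e * d%:R * \sum_(u <- V) w u j <= K j - e * d%:R * w v j.
  by move=> j; rewrite lerBrDr -mulrDr addrC; move: (hK j); rewrite big_cons.
have [V1 [hV1 E1]] := IH hV (fun j => K j - e * d%:R * w v j) hK'.
have [V2 [hV2 E2]] := expand vD he.
exists (V1 ++ V2); split; first by rewrite all_cat hV1.
move=> X; rewrite /phi_low big_cat /= -/(phi_low V1 X) -/(phi_low V2 X) -E1 E2.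
rewrite phi_low_Q big_cons -phi_low_Q -/(Q X v v).
under [X in _ = X - _ + _]eq_bigr => j _ do rewrite scalerBl.
rewrite sumrB scalerDr addrACA subrK opprD [- _ + _]addrC.
done.
Qed.

Lemma phi_low_basis X : phi_low (vbasis D) X = \sum_(j < d) Q X (b j) (b j).
Proof. by rewrite phi_low_Q (big_nth 0) big_mkord size_tuple. Qed.

Lemma key2 (V : seq 'M[C]_(m,n)) : all (fun u => u \in D) V ->
  exists N : C, 0 <= N /\ forall e t, 0 <= e -> e * N <= t ->
  exists V', all (fun u => u \in D) V' /\ forall X,
    t *: phi_low (vbasis D) X - e *: phi_low V X = phi_low V' X.
Proof.
move=> hV; exists (d%:R * \sum_(j < d) \sum_(v <- V) w v j); split.
  by rewrite mulr_ge0 ?ler0n // sumr_ge0 // => j _; rewrite sumr_ge0 // => v _; apply: w_ge0.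
move=> e t he het.
have hK : forall j, e * d%:R * \sum_(v <- V) w v j <= (fun _ => t) j.
  move=> j /=; apply: le_trans het; rewrite -mulrA ler_wpM2l // ler_wpM2l ?ler0n //.
  rewrite (bigD1 j) //= lerDl sumr_ge0 // => k _; rewrite sumr_ge0 // => v _; apply: w_ge0.
have [V' [hV' E]] := key hV he hK.
exists V'; split => // X; rewrite -E phi_low_basis scaler_sumr //.
Qed.
End Key.

Lemma phi_up_low m n (V : seq 'M[C]_(m,n)) X : phi_up V X = phi_low V X^T.
Proof. by []. Qed.

Lemma scale_low m n (V : seq 'M[C]_(m,n)) c X : 0 <= c ->
  c *: phi_low V X = phi_low (map (fun v => sqrtC c *: v) V) X.
Proof.
move=> hc; rewrite !phi_low_Q big_map scaler_sumr; apply: eq_bigr => v _.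
by rewrite QZZ sqrtCC.
Qed.

Lemma all_scale m n (D : {vspace 'M[C]_(m,n)}) (V : seq 'M[C]_(m,n)) c :
  all (fun u => u \in D) V -> all (fun u => u \in D) (map (fun v => c *: v) V).
Proof. by move=> /allP h; apply/allP => u /mapP [v /h vD ->]; rewrite memvZ. Qed.

Lemma sigma_rep m n (D E : {vspace 'M[C]_(m,n)}) y : sigmaDE D E y ->
  exists V W, all (fun u => u \in D) V /\ all (fun u => u \in E) W /\
    forall X, y X = phi_low V X + phi_up W X.
Proof.
case=> l [hl [_ hy]].
suff [V [W [hV [hW HE]]]] : exists V W, all (fun u => u \in D) V /\ all (fun u => u \in E) W /\
    forall X, \sum_(p <- l) p.1 *: p.2 X = phi_low V X + phi_up W X.
  by exists V, W; split => //; split => // X; rewrite hy HE.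
elim: l hl {hy} => [|p l IH] hl.
  by exists [::], [::]; split => //; split => // X; rewrite big_nil /phi_low /phi_up !big_nil addr0.
have [V [W [hV [hW HE]]]] := IH (fun q hq => hl q (or_intror hq)).
have [hp1 hp2] := hl p (or_introl erefl).
case: hp2 => [[U [hU EU]] | [U [hU EU]]].
- exists (map (fun v => sqrtC p.1 *: v) U ++ V), W; split; first by rewrite all_cat all_scale.
  split => // X; rewrite big_cons HE EU scale_low // addrA; congr (_ + _).
  by rewrite /phi_low big_cat.
- exists V, (map (fun v => sqrtC p.1 *: v) U ++ W); split => //; split; first by rewrite all_cat all_scale.
  move=> X; rewrite big_cons HE EU !phi_up_low scale_low // addrCA; congr (_ + _).
  by rewrite /phi_low big_cat.
Qed.

Lemma sigma_of_rep m n (D E : {vspace 'M[C]_(m,n)}) V W :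
  all (fun u => u \in D) V -> all (fun u => u \in E) W ->
  sigmaDE D E (fun X => phi_low V X + phi_up W X).
Proof.
move=> hV hW.
have h2 : (0 : C) <= 2%:R by rewrite ler0n.
exists [:: (2%:R^-1, phi_low (map (fun v => sqrtC 2%:R *: v) V));
          (2%:R^-1, phi_up (map (fun v => sqrtC 2%:R *: v) W))].
split.
  move=> p [<-|[<-|//]] /=; (split; first by rewrite invr_ge0).
    by left; exists (map (fun v => sqrtC 2%:R *: v) V); rewrite all_scale.
  by right; exists (map (fun v => sqrtC 2%:R *: v) W); rewrite all_scale.
split.
  by rewrite !big_cons big_nil addr0 /= -{1 2}[2%:R^-1]mul1r -mulrDl mulfV // (pnatr_eq0 _ 2).
move=> X; rewrite !big_cons big_nil addr0 /= !phi_up_low -!scale_low // !scalerA.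
by rewrite mulVf ?pnatr_eq0 // !scale1r.
Qed.

Section Lin.
Variables (m n : nat) (psi : mapT C m n) (hl : linear psi).
Lemma lin0 : psi 0 = 0.
Proof.
have h := hl 1 0 0; rewrite scale1r addr0 scale1r in h.
by apply: (addrI (psi 0)); rewrite -h addr0.
Qed.
Lemma linD X Y : psi (X + Y) = psi X + psi Y.
Proof. by have := hl 1 X Y; rewrite !scale1r. Qed.
Lemma linZ c X : psi (c *: X) = c *: psi X.
Proof. by have := hl c X 0; rewrite !addr0 lin0 addr0. Qed.
Lemma lin_sum I (r : seq I) (F : I -> 'M[C]_m) : psi (\sum_(i <- r) F i) = \sum_(i <- r) psi (F i).
Proof.
elim: r => [|x r IH]; first by rewrite !big_nil lin0.
by rewrite !big_cons linD IH.
Qed.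
End Lin.

Lemma pairing_comb m n (A : blockT C m n) t (y x : mapT C m n) :
  pairing A (comb t y x) = (1 - t) * pairing A y + t * pairing A x.
Proof.
rewrite /pairing !mulr_sumr -big_split; apply: eq_bigr => i _.
rewrite !mulr_sumr -big_split; apply: eq_bigr => j _.
by rewrite /comb linearD !linearZ /= mulmxDr -!scalemxAr mxtraceD !mxtraceZ.
Qed.

Lemma pairing_sum m n I (r : seq I) (c : I -> C) (F : I -> blockT C m n) psi :
  pairing (\sum_(i <- r) map_mx (fun M => c i *: M) (F i)) psi = \sum_(i <- r) c i * pairing (F i) psi.
Proof.
elim: r => [|x r IH].
  rewrite !big_nil /pairing; apply: big1 => i _; apply: big1 => j _.
  by rewrite mxE mul0mx mxtrace0.
rewrite !big_cons -IH /pairing mulr_sumr -big_split; apply: eq_bigr => i _.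
rewrite mulr_sumr -big_split; apply: eq_bigr => j _.
by rewrite !mxE mulmxDl mxtraceD -scalemxAl mxtraceZ.
Qed.

Definition nrm k (x : 'cV[C]_k) : C := (adj x *m x) 0 0.

Lemma nrmE k (x : 'cV[C]_k) : nrm x = \sum_l `|x l 0| ^+ 2.
Proof. by rewrite /nrm mxE; apply: eq_bigr => l _; rewrite !mxE normCK mulrC. Qed.

Lemma nrm_ge0 k (x : 'cV[C]_k) : 0 <= nrm x.
Proof. by rewrite nrmE sumr_ge0 // => l _; rewrite exprn_ge0. Qed.

Lemma nrm_eq0 k (x : 'cV[C]_k) : nrm x = 0 -> x = 0.
Proof.
rewrite nrmE => h; apply/matrixP => l o; rewrite ord1 mxE.
have := psumr_eq0P (fun l _ => exprn_ge0 2 (normr_ge0 (x l 0))) h (i := l) isT.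
by move/eqP; rewrite expf_eq0 /= normr_eq0 => /eqP.
Qed.

Lemma tr1 (M : 'M[C]_1) : \tr M = M 0 0.
Proof. by rewrite /mxtrace big_ord1. Qed.

Lemma adj_tr k l (M : 'M[C]_(k,l)) : adj (M^T) = (adj M)^T.
Proof. by apply/matrixP => i j; rewrite !mxE. Qed.

Lemma row_rank1 m n (a : 'cV[C]_m) (b : 'rV[C]_n) i : row i (a *m b) = a i 0 *: b.
Proof. by apply/matrixP => o k; rewrite !mxE big_ord1 (ord1 o). Qed.

Lemma ztilde_rank1 m n (a : 'cV[C]_m) (b : 'rV[C]_n) i j :
  ztilde (a *m b) i j = (a i 0 * (a j 0)^*) *: (b^T *m adj (b^T)).
Proof.
rewrite /ztilde mxE !row_rank1 !linearZ /= adjZ -scalemxAl -scalemxAr scalerA //.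
Qed.

Lemma aadj_entry m (a : 'cV[C]_m) i j : (a *m adj a) i j = a i 0 * (a j 0)^*.
Proof. by rewrite !mxE big_ord1 !mxE. Qed.

Lemma pairing_rank1 m n (a : 'cV[C]_m) (b : 'rV[C]_n) psi : linear psi ->
  pairing (ztilde (a *m b)) psi = (adj (adj b) *m psi (a *m adj a) *m adj b) 0 0.
Proof.
move=> hl.
have -> : pairing (ztilde (a *m b)) psi = \tr (b^T *m adj (b^T) *m (psi (a *m adj a))^T).
  rewrite [a *m adj a]matrix_sum_delta (lin_sum hl) linear_sum mulmx_sumr /= raddf_sum /=.
  apply: eq_bigr => i _; rewrite (lin_sum hl) linear_sum mulmx_sumr /= raddf_sum /=.
  apply: eq_bigr => j _; rewrite ztilde_rank1 aadj_entry (linZ hl) !linearZ /=.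
  by rewrite -scalemxAl mxtraceZ.
rewrite -mulmxA mxtrace_mulC tr1.
have -> : adj b^T *m (psi (a *m adj a))^T *m b^T = (adj (adj b) *m psi (a *m adj a) *m adj b)^T.
  by rewrite !trmx_mul adjK -adj_tr mulmxA.
by rewrite mxE.
Qed.

Lemma psd_aadj m (a : 'cV[C]_m) : psd (a *m adj a).
Proof.
move=> x; rewrite !mulmxA -mulmxA -[adj a *m x]adjK adj_mul adjK.
by have := nrm_ge0 (adj (adj x *m a)); rewrite /nrm adjK.
Qed.

Lemma pairing_rank1_ge0 m n (a : 'cV[C]_m) (b : 'rV[C]_n) (psi : mapT C m n) :
  P1 psi -> 0 <= pairing (ztilde (a *m b)) psi.
Proof. by case=> hl hp; rewrite pairing_rank1 //; apply: hp; apply: psd_aadj. Qed.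

Lemma rank1_fact m n (hm : (0 < m)%N) (hn : (0 < n)%N) (z : 'M[C]_(m,n)) :
  (\rank z <= 1)%N -> exists (a : 'cV[C]_m) (b : 'rV[C]_n), z = a *m b.
Proof.
move=> hr; rewrite -(mulmx_ebase z).
have : (\rank z == 0)%N || (\rank z == 1)%N by case: (\rank z) hr => [|[|]].
case/orP => /eqP ->.
  by exists 0, 0; rewrite pid_mx_0 mulmx0 mul0mx mulmx0.
pose i0 := Ordinal hm; pose j0 := Ordinal hn.
exists (col_ebase z *m delta_mx i0 0), (delta_mx 0 j0 *m row_ebase z).
have -> : pid_mx 1 = (delta_mx i0 (0 : 'I_1) *m delta_mx (0 : 'I_1) j0 : 'M[C]_(m,n)).
  apply/matrixP => i j; rewrite mul_delta_mx !mxE.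
  case: i j => [[|i] hi] [[|j] hj]; rewrite /= ?andbT ?andbF //=.
by rewrite !mulmxA.
Qed.

Lemma adjm_eq0 p q (M : 'M[C]_(p,q)) : adj M = 0 -> M = 0.
Proof. by move=> h; rewrite -[M]adjK h adj0. Qed.

Lemma ztilde0 m n : ztilde (0 : 'M[C]_(m,n)) = 0.
Proof. by apply/matrixP => i j; rewrite !mxE row0 trmx0 mul0mx. Qed.

Definition y0 m n : mapT C m n := fun X => \tr X *: (1%:M : 'M[C]_n).
Arguments y0 : clear implicits.

Lemma tr_psd k (X : 'M[C]_k) : psd X -> 0 <= \tr X.
Proof.
move=> hX; rewrite /mxtrace sumr_ge0 // => i _.
have := hX (delta_mx i 0).
have -> : adj (delta_mx i 0 : 'cV[C]_k) = delta_mx 0 i.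
  by apply/matrixP => o l; rewrite !mxE rmorph_nat andbC.
by rewrite -rowE -colE !mxE.
Qed.

Lemma y0_P1 m n : P1 (y0 m n).
Proof.
split.
  by move=> c X Y; rewrite /y0 mxtraceD mxtraceZ scalerDl scalerA.
move=> X hX x; rewrite /y0 -scalemxAr -scalemxAl mulmx1 mxE -/(nrm x).
by rewrite mulr_ge0 ?nrm_ge0 // tr_psd.
Qed.

Lemma pairing_y0 m n (a : 'cV[C]_m) (b : 'rV[C]_n) :
  pairing (ztilde (a *m b)) (y0 m n) = nrm a * nrm (adj b).
Proof.
rewrite pairing_rank1; last by case: (y0_P1 m n).
rewrite /y0 -scalemxAr -scalemxAl mulmx1 mxE -/(nrm (adj b)).
by rewrite mxtrace_mulC tr1.
Qed.

Lemma In_mem (T : eqType) (x : T) l : x \in l -> List.In x l.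
Proof.
elim: l => //= y l IH; rewrite inE => /orP [/eqP ->|/IH]; by [left|right].
Qed.

Lemma V1_props m n (hm : (0 < m)%N) (hn : (0 < n)%N) (A : blockT C m n) :
  V1 A -> A != 0 -> (forall psi, P1 psi -> 0 <= pairing A psi) /\ 0 < pairing A (y0 m n).
Proof.
case=> l [hl ->] hA0.
have hl' p : p \in l -> 0 <= p.1 /\ exists (a : 'cV[C]_m) (b : 'rV[C]_n), p.2 = a *m b.
  by move=> /In_mem /hl [h1 h2]; split => //; apply: rank1_fact.
have pos psi : P1 psi -> 0 <= pairing (\sum_(p <- l) map_mx (fun M => p.1 *: M) (ztilde p.2)) psi.
  move=> hpsi; rewrite pairing_sum big_seq sumr_ge0 // => p /hl' [h1 [a [b ->]]].
  by rewrite mulr_ge0 // pairing_rank1_ge0.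
split => //.
rewrite lt_def pos ?andbT; last exact: y0_P1.
apply: contraNneq hA0 => /eqP.
rewrite pairing_sum big_seq psumr_eq0; last first.
  by move=> p /hl' [h1 [a [b ->]]]; rewrite mulr_ge0 // pairing_rank1_ge0 //; apply: y0_P1.
move=> /allP H; apply/eqP; rewrite big_seq; apply: big1 => p hp.
have := H p hp; rewrite hp /=.
case: (hl' p hp) => _ [a [b hab]]; rewrite hab pairing_y0 !mulf_eq0.
case/or3P => /eqP h.
- by apply/matrixP => i j; rewrite !mxE h scale0r.
- have -> : a = 0 by apply: nrm_eq0.
  by rewrite mul0mx ztilde0; apply/matrixP => i j; rewrite !mxE scaler0.
- have -> : b = 0 by apply: adjm_eq0; apply: nrm_eq0.
  by rewrite mulmx0 ztilde0; apply/matrixP => i j; rewrite !mxE scaler0.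
Qed.

Lemma sigma_ext m n (D E : {vspace 'M[C]_(m,n)}) (f g : mapT C m n) :
  (forall X, f X = g X) -> sigmaDE D E g -> sigmaDE D E f.
Proof. by move=> h [l [h1 [h2 h3]]]; exists l; split => //; split => // X; rewrite h h3. Qed.
End Aux.


Theorem theorem3p1 (R : realType) (m n : nat) (hm : (0 < m)%N) (hn : (0 < n)%N)
  (D E : {vspace 'M[R[i]]_(m, n)})
  (hface : proper_face (sigmaDE D E) (@Dec R[i] m n))
  (hint : forall phi : mapT R[i] m n,
      interior_point (sigmaDE D E) phi -> interior_point (@P1 R[i] m n) phi)
  (A : blockT R[i] m n) :
  dual_face (sigmaDE D E) A -> A != 0 -> Tcone A /\ ~ V1 A.
Proof.
move=> [hT hA] hA0; split => // hV.
have [hpos hy0] := V1_props hm hn hV hA0.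
pose phi0 : mapT R[i] m n := fun X => phi_low (vbasis D) X + phi_up (vbasis E) X.
have s0 : sigmaDE D E phi0.
  by apply: sigma_of_rep; apply/allP => u; apply: vbasis_mem.
have hint0 : interior_point (sigmaDE D E) phi0.
  split => // y hy.
  have [V [W [hV' [hW Ey]]]] := sigma_rep hy.
  have [N1 [hN1 K1]] := key2 hV'.
  have [N2 [hN2 K2]] := key2 hW.
  have hM : 0 < 1 + N1 + N2.
    by rewrite -addrA; apply: (lt_le_trans ltr01); rewrite lerDl addr_ge0.
  pose e : R[i] := (1 + N1 + N2)^-1.
  have he : 0 < e by rewrite invr_gt0.
  have hb N : 0 <= N -> N <= 1 + N1 + N2 -> e * N <= 1 + e.
    move=> h0 h1.
    have h2 : e * N <= 1 by rewrite -(mulVf (lt0r_neq0 hM)) ler_wpM2l // ltW.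
    by apply: (le_trans h2); rewrite lerDl ltW.
  have hN1' : N1 <= 1 + N1 + N2 by rewrite [1 + N1]addrC -addrA lerDl addr_ge0.
  have hN2' : N2 <= 1 + N1 + N2 by rewrite lerDr addr_ge0.
  have [V' [hV'' E1]] := K1 e (1 + e) (ltW he) (hb _ hN1 hN1').
  have [W' [hW'' E2]] := K2 e (1 + e) (ltW he) (hb _ hN2 hN2').
  exists (1 + e); split; first by rewrite ltrDl.
  apply: (sigma_ext (g := fun X => phi_low V' X + phi_up W' X)); last exact: sigma_of_rep.
  move=> X; rewrite /comb Ey /phi0 opprD addrA subrr add0r scaleNr.
  rewrite -E1 [phi_up W' X]phi_up_low -E2 !phi_up_low !scalerDr opprD.
  by rewrite addrC addrACA.
have [hP1 H] := hint phi0 hint0.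
have [t [ht hP]] := H (@y0 _ m n) (@y0_P1 _ m n).
have := hpos _ hP; rewrite pairing_comb (hA phi0 s0) mulr0 addr0 pmulr_lge0 // subr_ge0.
by move=> h; have := lt_le_trans ht h; rewrite ltxx.
Qed.
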